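(* Let $\alpha=(\alpha_1,\dots,\alpha_n)\in\mathbb{R}^n$ with $\alpha_1,\dots,\alpha_n,1$ linearly independent over $\mathbb{Q}$, and $\ell=n+1$. If $L_\alpha$ is badly approximable, then there is $c>0$ such that there are infinitely many $A\in\mathrm{GL}(\ell,\mathbb{Z})$ with $$\|A(\alpha_1,\dots,\alpha_n,1)^\top\|_\infty<c\,\|A\|_\infty^{-n}.$$
   Context: $L_\alpha(x)=\alpha_1x_1+\cdots+\alpha_nx_n$. For $t\in\mathbb{R}$, $\|t\|$ is the distance to the nearest integer; for a real matrix or vector, $\|\cdot\|_\infty$ is the maximum absolute value of its entries. $L_\alpha$ is badly approximable if there is $c>0$ with $\|L_\alpha(q)\|\ge c\|q\|_\infty^{-n}$ for all nonzero $q\in\mathbb{Z}^n$. *)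

(* Defs.v *)
From HB Require Import structures.
From mathcomp Require Import all_boot all_order all_algebra.
From Stdlib Require Import Reals QArith.
Set Implicit Arguments. Unset Strict Implicit. Unset Printing Implicit Defensive.

Open Scope R_scope.

Definition intR (z : int) : R :=
  match z with Posz k => INR k | Negz k => - INR k.+1 end.

(* ||t|| : distance from t to the nearest integer; up t is the integer
   with t < up t <= t + 1, so floor-ish is up t - 1 *)
Definition dist_int (t : R) : R :=
  Rmin (t - IZR (up t - 1)) (IZR (up t) - t).

(* the vector (alpha_1, ..., alpha_n, 1) in R^(n+1) *)
Definition ext_vec (n : nat) (alpha : 'I_n -> R) (i : 'I_n.+1) : R :=
  match (insub (nat_of_ord i) : option 'I_n) with
  | Some j => alpha j
  | None => 1
  end.

Definition Q_lin_indep (n : nat) (alpha : 'I_n -> R) : Prop :=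
  forall q : 'I_n.+1 -> Q,
    \big[Rplus/0]_(i < n.+1) (Q2R (q i) * ext_vec alpha i) = 0 ->
    forall i, q i == 0%Q.

Definition L_form (n : nat) (alpha : 'I_n -> R) (q : 'I_n -> Z) : R :=
  \big[Rplus/0]_(i < n) (alpha i * IZR (q i)).

Definition supnormZ (n : nat) (q : 'I_n -> Z) : R :=
  \big[Rmax/0]_(i < n) Rabs (IZR (q i)).

Definition badly_approximable (n : nat) (alpha : 'I_n -> R) : Prop :=
  exists c : R, 0 < c /\
    forall q : 'I_n -> Z, (exists i, q i <> 0%Z) ->
      dist_int (L_form alpha q) >= c * / (supnormZ q ^ n).

Definition mx_supnorm (l : nat) (A : 'M[int]_l) : R :=
  \big[Rmax/0]_(i < l) \big[Rmax/0]_(j < l) Rabs (intR (A i j)).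

Definition mxvec_supnorm (l : nat) (A : 'M[int]_l) (v : 'I_l -> R) : R :=
  \big[Rmax/0]_(i < l) Rabs (\big[Rplus/0]_(j < l) (intR (A i j) * v j)).

(* Main.v *)
Require Import Defs.
From HB Require Import structures.
From mathcomp Require Import all_boot all_order all_algebra.
From Stdlib Require Import Reals QArith.
Open Scope R_scope.

From Stdlib Require Import ZArith Classical_Prop.
From mathcomp Require Import Rstruct.
From mathcomp Require Import ring lra zify.

Module Aux.
Set Implicit Arguments. Unset Strict Implicit. Unset Printing Implicit Defensive.
Import Order.TTheory GRing.Theory Num.Theory.
Local Close Scope Q_scope.

Section Core.
Local Open Scope ring_scope.
Variable R : archiRealFieldType.

Definition intmx m n (U : 'M[int]_(m,n)) : 'M[R]_(m,n) := map_mx (@intmul R 1) U.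
Definition qf d (G : 'M[R]_d) (x : 'cV[R]_d) : R := (x^T *m G *m x) 0 0.

Lemma qf_col d (G : 'M[R]_(1 + d)) (r : R) (y : 'cV[R]_d) :
  G^T = G ->
  let a := G 0 0 in let b := ursubmx G in
  let S := drsubmx G - a^-1 *: (b^T *m b) in
  a != 0 ->
  qf G (col_mx r%:M y) = a * (r + a^-1 * (b *m y) 0 0) ^+ 2 + qf S y.
Proof.
move=> sG a b S a0.
have Ea : ulsubmx G = a%:M.
  apply/matrixP=> i j; rewrite !ord1 !mxE /= mulr1n /a; by congr (G _ _); apply: val_inj.
have Eb : dlsubmx G = b^T.
  by rewrite /b trmx_ursub sG.
rewrite /qf -[in LHS](submxK G) Ea Eb tr_col_mx mul_row_block mul_row_col.
rewrite tr_scalar_mx !mulmxDl /S mulmxBr mulmxBl -scalemxAr -scalemxAl.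
rewrite !mulmxA -trmx_mul -(mulmxA _ b y) -(mulmxA _ (ursubmx G) y).
rewrite !mul_scalar_mx !mul_mx_scalar -/b.
set t := b *m y.
rewrite !mxE !big_ord1 !mxE /= mulr1n.
set T1 := \sum_(j < d) _ * _. set T2 := \sum_(j < d) (y^T *m _) 0 j * _.
by field.
Qed.

Lemma det_schur d (G : 'M[R]_(1 + d)) :
  G^T = G ->
  let a := G 0 0 in let b := ursubmx G in
  let S := drsubmx G - a^-1 *: (b^T *m b) in
  a != 0 -> \det G = a * \det S.
Proof.
move=> sG a b S a0.
have Ea : ulsubmx G = a%:M.
  apply/matrixP=> i j; rewrite !ord1 !mxE /= mulr1n /a; by congr (G _ _); apply: val_inj.
have Eb : dlsubmx G = b^T by rewrite /b trmx_ursub sG.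
have E : block_mx 1%:M 0 (- a^-1 *: b^T) 1%:M *m G = block_mx a%:M b 0 S.
  rewrite -[in LHS](submxK G) Ea Eb mulmx_block !mul0mx !mul1mx !addr0.
  rewrite scaleNr mulNmx -scalemxAl mul_mx_scalar scalerA mulVf // scale1r addNr.
  by rewrite /S addrC mulNmx -scalemxAl.
have := congr1 determinant E.
rewrite det_mulmx det_lblock det_ublock !det_scalar1 det1 !mul1r => ->.
by [].
Qed.


Definition lowb d (G : 'M[R]_d) e := forall x : 'cV[int]_d, x != 0 -> e <= qf G (intmx x).

Lemma intmxM m n p (A : 'M[int]_(m,n)) (B : 'M[int]_(n,p)) :
  intmx (A *m B) = intmx A *m intmx B.
Proof. exact: map_mxM. Qed.

Lemma intmx_tr m n (A : 'M[int]_(m,n)) : intmx A^T = (intmx A)^T.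
Proof. by rewrite /intmx map_trmx. Qed.

Lemma intmx_col m1 m2 n (A : 'M[int]_(m1,n)) (B : 'M[int]_(m2,n)) :
  intmx (col_mx A B) = col_mx (intmx A) (intmx B).
Proof. exact: map_col_mx. Qed.

Lemma intmx_scalar n (z : int) : intmx (z%:M : 'M_n) = (z%:~R)%:M.
Proof. exact: map_scalar_mx. Qed.

Lemma intmx0 m n : intmx (0 : 'M[int]_(m,n)) = 0.
Proof. by apply/matrixP=> i j; rewrite !mxE. Qed.

Lemma det_intmx n (A : 'M[int]_n) : \det (intmx A) = (\det A)%:~R.
Proof. exact: det_map_mx. Qed.

Lemma unit_det2 n (U : 'M[int]_n) : U \in unitmx -> (\det (intmx U)) ^+ 2 = 1.
Proof.
rewrite unitmxE det_intmx => /orP[] /eqP -> ; rewrite ?mulNrz ?sqrrN; by rewrite expr1n.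
Qed.

Lemma qf_trans d (G : 'M[R]_d) (U : 'M[int]_d) (x : 'cV[int]_d) :
  qf ((intmx U)^T *m G *m intmx U) (intmx x) = qf G (intmx (U *m x)).
Proof. by rewrite /qf intmxM trmx_mul !mulmxA. Qed.

Lemma unit_nz d (U : 'M[int]_d) (x : 'cV[int]_d) : U \in unitmx -> x != 0 -> U *m x != 0.
Proof.
move=> uU; apply: contraNneq => Ux0.
by rewrite -(mulKmx uU x) Ux0 mulmx0.
Qed.

Lemma qf_scale d (G : 'M[R]_d) c x : qf G (c *: x) = c ^+ 2 * qf G x.
Proof.
rewrite /qf (_ : (c *: x)^T = c *: x^T); last by apply/matrixP=> i j; rewrite !mxE.
by rewrite -!scalemxAl -scalemxAr !mxE mulrA expr2.
Qed.


Lemma e0_nz d : (col_mx 1%:M 0 : 'cV[int]_(1 + d)) != 0.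
Proof.
rewrite col_mx_eq0 negb_and; apply/orP; left; apply/eqP => /matrixP/(_ 0 0).
by rewrite !mxE.
Qed.

Definition NM d (G : 'M[R]_d) :=
  exists x : 'cV[int]_d, x != 0 /\
    forall y, y != 0 -> qf G (intmx x) <= 2 * qf G (intmx y).

Lemma nearmin d (G : 'M[R]_(1+d)) e : 0 < e -> lowb G e -> NM G.
Proof.
move=> e0 lb.
suff H : forall k (x : 'cV[int]_(1+d)), x != 0 -> qf G (intmx x) < 2 ^+ k * e -> NM G.
  have := upper_nthrootP (leqnn (Num.bound (qf G (intmx (col_mx 1%:M 0 : 'cV[int]_(1 + d))) / e))).
  rewrite ltr_pdivrMr // => h; exact: (H _ _ (e0_nz d) h).
elim => [|k IH] x xnz lt.
  by move: (lb x xnz); rewrite leNgt; move: lt; rewrite expr0 mul1r => ->.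
case: (classic (exists y, y != 0 /\ 2 * qf G (intmx y) < qf G (intmx x))) => [[y [ynz lty]]|nex].
  apply: (IH y ynz); move: lt; rewrite exprS -mulrA; set X := 2 ^+ k * e; lra.
by exists x; split => // y ynz; rewrite leNgt; apply/negP => h; apply: nex; by exists y.
Qed.


Lemma sq_ge1 (c : int) : c != 0 -> 1 <= (c%:~R : R) ^+ 2.
Proof. move=> /eqP c0; rewrite expr2 -intrM ler1z; nia. Qed.

Lemma intmxZ m n (c : int) (A : 'M[int]_(m,n)) : intmx (c *: A) = c%:~R *: intmx A.
Proof. by apply/matrixP=> i j; rewrite !mxE intrM. Qed.

Lemma e0E d (i : 'I_(1 + d)) : (col_mx 1%:M 0 : 'cV[int]_(1+d)) i 0 = (i == 0 :> nat)%:R.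
Proof. by rewrite mxE; case: splitP => [j ->|k ->]; rewrite ?ord1 mxE. Qed.

Lemma step d (G : 'M[R]_(1+d)) e : 0 < e -> lowb G e ->
  exists U : 'M[int]_(1+d), U \in unitmx /\
    forall y : 'cV[int]_(1+d), y != 0 ->
      qf G (intmx (U *m col_mx 1%:M 0)) <= 2 * qf G (intmx y).
Proof.
move=> e0 lb; have [x [xnz hx]] := nearmin e0 lb.
have [L uL [Rm uR [ds _ Ex]]] := int_Smith_normal_form x.
exists L; split => // y ynz.
rewrite -mulmxA in Ex.
set w := (\matrix_(i, j) (ds`_i *+ (i == j :> nat))) *m Rm in Ex.
have Ew : w = (w 0 0) *: col_mx 1%:M 0.
  apply/matrixP => i j; rewrite ord1 {j} [in RHS]mxE.
  rewrite /w mxE big_ord1 mxE [in RHS]mxE.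
  rewrite e0E big_ord1 !mxE.
  case: (i =P 0 :> nat) => [->|]; first by rewrite mulr1.
  by move=> _; rewrite mulr0n mul0r mulr0.
rewrite Ew -scalemxAr in Ex.
set m := L *m col_mx 1%:M 0 in Ex *.
set c := w 0 0 in Ex.
have cnz : c != 0 by apply: contraNneq xnz => c0; rewrite Ex c0 scale0r.
have mnz : m != 0 by apply: contraNneq xnz => m0; rewrite Ex m0 scaler0.
have := hx y ynz; rewrite Ex intmxZ qf_scale.
have := lb m mnz; have := sq_ge1 cnz; nra.
Qed.


Lemma qf_e0 d (M : 'M[R]_(1 + d)) : qf M (col_mx 1%:M 0) = M 0 0.
Proof.
rewrite /qf -[in LHS](submxK M) tr_col_mx tr_scalar_mx trmx0 mul_row_block.
rewrite mul_row_col mulmx0 addr0 mulmx1 mul1mx !mxE.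
rewrite big1 ?addr0; last by move=> i _; rewrite mxE mul0r.
by congr (M _ _); apply: val_inj.
Qed.

Definition rnd (t : R) : int := - Num.floor (t + 1/2).
Lemma rnd_spec (t : R) : ((rnd t)%:~R + t) ^+ 2 <= 1/4.
Proof.
rewrite /rnd.
have := floor_itv (t + 1/2); rewrite intrD; set f := (Num.floor _)%:~R => /andP[h1 h2].
rewrite mulrNz. nra.
Qed.

Lemma decomp d (G : 'M[R]_(1+d)) e : G^T = G -> 0 < e -> lowb G e ->
 exists (U : 'M[int]_(1+d)) (a : R) (b : 'rV[R]_d) (S : 'M[R]_d),
  [/\ U \in unitmx, e <= a, S^T = S, lowb S (a/4) & \det G = a * \det S] /\
   forall (r : int) (y : 'cV[int]_d),
     qf G (intmx (U *m col_mx r%:M y)) =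
       a * (r%:~R + a^-1 * (b *m intmx y) 0 0) ^+ 2 + qf S (intmx y).
Proof.
move=> sG e0 lb.
have [U [uU hU]] := step e0 lb.
set G' := (intmx U)^T *m G *m intmx U.
have sG' : G'^T = G' by rewrite /G' !trmx_mul trmxK sG mulmxA.
have lb' : lowb G' e by move=> x xnz; rewrite qf_trans; apply: lb; apply: unit_nz.
set a := G' 0 0.
have Ea : a = qf G (intmx (U *m col_mx 1%:M 0)).
  by rewrite -qf_trans intmx_col intmx_scalar intmx0 /= qf_e0.
have ae : e <= a by rewrite Ea; apply: lb; apply: unit_nz => //; apply: e0_nz.
have a0 : a != 0 by rewrite gt_eqF // (lt_le_trans e0 ae).
set b := ursubmx G'.
set S := drsubmx G' - a^-1 *: (b^T *m b).
have Eq : forall (r : int) (y : 'cV[int]_d),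
     qf G (intmx (U *m col_mx r%:M y)) =
       a * (r%:~R + a^-1 * (b *m intmx y) 0 0) ^+ 2 + qf S (intmx y).
  by move=> r y; rewrite -qf_trans intmx_col intmx_scalar qf_col.
exists U, a, b, S; split => //; split => //.
- rewrite /S linearB /= trmx_drsub sG' linearZ /= trmx_mul trmxK //.
- move=> y ynz.
  set r := rnd (a^-1 * (b *m intmx y) 0 0); have hr := rnd_spec (a^-1 * (b *m intmx y) 0 0).
  have xnz : col_mx r%:M y != 0 by rewrite col_mx_eq0 negb_and ynz orbT.
  have := hU _ (unit_nz uU xnz); rewrite -Ea Eq.
  have apos : 0 < a by exact: (lt_le_trans e0 ae).
  set z := (_ + _) ^+ 2 in hr *; nra.
- rewrite -(det_schur sG' a0).
  rewrite /G' !det_mulmx det_tr mulrC mulrA -expr2 unit_det2 // mul1r //.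
Qed.


Fixpoint gam d : R := if d is d'.+1 then 4 ^+ d' * gam d' else 1.

Lemma gam_gt0 d : 0 < gam d.
Proof. elim: d => [|d IH] /=; [exact: ltr01|]; apply: mulr_gt0 => //; exact: exprn_gt0. Qed.

Lemma hermite d : forall (G : 'M[R]_d) e, G^T = G -> 0 < e -> lowb G e ->
  e ^+ d <= gam d * \det G.
Proof.
elim: d => [|d IH] G e sG e0 lb.
  by rewrite expr0 det_mx00 /= mulr1.
have [U [a [b [S [[uU ae sS lbS EdG] _]]]]] := decomp sG e0 lb.
have apos : 0 < a := lt_le_trans e0 ae.
have := IH S (a/4) sS (divr_gt0 apos (ltr0n _ 4)) lbS.
rewrite EdG /= => h.
have h1 : e ^+ d.+1 <= a ^+ d.+1 by rewrite lerXn2r // ?nnegrE ltW.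
apply: (le_trans h1).
have p4 : 0 < 4 ^+ d :> R by apply: exprn_gt0.
rewrite expr_div_n ler_pdivrMr // in h.
rewrite exprS.
have : a * a ^+ d <= a * (gam d * \det S * 4 ^+ d) by rewrite ler_pM2l.
move=> h2; apply: (le_trans h2); rewrite le_eqVlt; apply/orP; left; apply/eqP.
by ring.
Qed.


Lemma col_mulmx m n p (A : 'M[int]_(m,n)) (B : 'M[int]_(n,p)) i : col i (A *m B) = A *m col i B.
Proof. by rewrite !colE mulmxA. Qed.

Lemma basis d : forall e D, 0 < e -> exists F : R, forall G : 'M[R]_d, G^T = G ->
  lowb G e -> \det G <= D ->
  exists U : 'M[int]_d, U \in unitmx /\ forall i, qf G (intmx (col i U)) <= F.
Proof.
elim: d => [|d IH] e D e0.
  exists 0 => G _ _ _; exists 1%:M; split; [exact: unitmx1| by case].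
have [F' hF'] := IH (e/4) (D/e) (divr_gt0 e0 (ltr0n _ 4)).
exists (Num.max 1 (4 ^+ d * gam d * D) + Num.max 0 F') => G sG lb dD.
have [U [a [b [S [[uU ae sS lbS EdG] Eq]]]]] := decomp sG e0 lb.
have apos : 0 < a := lt_le_trans e0 ae.
have h := hermite sS (divr_gt0 apos (ltr0n _ 4)) lbS.
have g0 := gam_gt0 d.
have p4 : 0 < 4 ^+ d :> R by apply: exprn_gt0.
have pa : 0 < (a/4) ^+ d by apply: exprn_gt0; apply: divr_gt0.
have dS0 : 0 <= \det S by nra.
have lbS' : lowb S (e/4).
  move=> y ynz; have := lbS y ynz; lra.
have dSD : \det S <= D / e.
  rewrite ler_pdivlMr //; rewrite EdG in dD; nra.
have [V [uV hV]] := hF' S sS lbS' dSD.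
have aK : a <= Num.max 1 (4 ^+ d * gam d * D).
  rewrite expr_div_n ler_pdivrMr // in h.
  have h2 : a ^+ d.+1 <= 4 ^+ d * gam d * D.
    rewrite exprS; rewrite EdG in dD.
    have : a * a ^+ d <= a * (gam d * \det S * 4 ^+ d) by rewrite ler_pM2l.
    move=> h3; apply: (le_trans h3).
    have -> : a * (gam d * \det S * 4 ^+ d) = (4 ^+ d * gam d) * (a * \det S) by ring.
    by rewrite ler_pM2l // mulr_gt0.
  case: (lerP a 1) => a1; first by rewrite le_max a1.
  rewrite le_max; apply/orP; right; apply: le_trans h2.
  by apply: ler_eXnr => //; apply: ltW.
set rr : 'M[int]_(1, d) := \row_j rnd (a^-1 * (b *m intmx (col j V)) 0 0).
set W : 'M[int]_(1 + d) := block_mx 1%:M rr 0 V.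
have uW : W \in unitmx by rewrite unitmxE det_ublock det1 mul1r -unitmxE.
exists (U *m W); split; first by rewrite unitmx_mul uU uW.
move=> i; rewrite col_mulmx /W block_mxEh.
case: (@split_ordP 1 d i) => [j ->|j ->].
  rewrite (@colKl _ _ 1 d) col_col_mx ord1.
  have -> : col 0 (1%:M : 'M[int]_1) = (1 : int)%:M by apply/matrixP=> k l; rewrite !ord1 !mxE.
  have -> : col 0 (0 : 'M[int]_(d, 1)) = 0 by apply/matrixP=> k l; rewrite !mxE.
  rewrite Eq intmx0 mulmx0 mxE mulr0 addr0 expr1n mulr1.
  rewrite (_ : qf S 0 = 0); last by rewrite /qf mulmx0 mxE.
  by rewrite addr0; apply: le_trans aK _; rewrite lerDl le_max lexx.
rewrite (@colKr _ _ 1 d) col_col_mx.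
have -> : col j rr = (rr 0 j)%:M by apply/matrixP=> k l; rewrite !ord1 !mxE.
rewrite Eq mxE.
have := rnd_spec (a^-1 * (b *m intmx (col j V)) 0 0).
have := hV j. have : F' <= Num.max 0 F' by rewrite le_max lexx orbT.
set z := (_ + _) ^+ 2. move: aK apos; nra.
Qed.

End Core.
Section AppS.
Local Open Scope ring_scope.
Lemma sumRE k (F : 'I_k -> R) : \big[Rplus/R0]_(i < k) F i = \sum_(i < k) F i.
Proof. by []. Qed.
Lemma intRE z : intR z = (z%:~R : R).
Proof. by case: z => k; rewrite /intR INRE ?NegzE ?mulrNz. Qed.
Lemma ev_widen n (alpha : 'I_n -> R) (j : 'I_n) : ext_vec alpha (widen_ord (leqnSn n) j) = alpha j.
Proof. by rewrite /ext_vec (_ : nat_of_ord (widen_ord _ j) = val j) // valK. Qed.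
Lemma ev_max n (alpha : 'I_n -> R) : ext_vec alpha ord_max = 1.
Proof. by rewrite /ext_vec insubF //= ltnn. Qed.

Lemma bigmax_ge k (F : 'I_k -> R) i : F i <= \big[Rmax/R0]_(j < k) F j.
Proof.
have : i \in index_enum 'I_k by rewrite mem_index_enum.
rewrite unlock; elim: (index_enum _) => // j s IH.
rewrite inE => /orP[/eqP<-|h] /=; rewrite RmaxE le_max ?lexx //.
by rewrite IH ?orbT.
Qed.

Lemma bigmax_le k (F : 'I_k -> R) B : 0 <= B -> (forall j, F j <= B) ->
  \big[Rmax/R0]_(j < k) F j <= B.
Proof. by move=> B0 hF; elim/big_ind: _ => // x y hx hy; rewrite RmaxE ge_max hx hy. Qed.

Definition toZ (z : int) : Z := match z with Posz k => Z.of_nat k | Negz k => (- Z.of_nat k.+1)%Z end.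
Lemma IZR_toZ z : IZR (toZ z) = z%:~R.
Proof. by case: z => k; rewrite /toZ ?opp_IZR -INR_IZR_INZ INRE ?NegzE ?mulrNz. Qed.
Lemma toZ_eq0 z : toZ z = 0%Z -> z = 0.
Proof. case: z => k /=; lia. Qed.

Lemma dist_le (t : R) (z : Z) : dist_int t <= `|t + IZR z|.
Proof.
have [h1 h2] := archimed t.
move/RltP: h1 => h1; move/RleP: h2 => h2.
rewrite /dist_int RminE minus_IZR /=.
set u := IZR (up t) in h1 h2 *.
rewrite ?RminusE ?R1E in h2 *.
rewrite ge_min !ler_normr.
case: (Z_le_gt_dec (- z) (up t - 1)) => h.
  have := IZR_le _ _ h; rewrite opp_IZR minus_IZR => /RleP h3.
  rewrite ?RminusE ?RoppE ?R1E -/u in h3.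
  apply/orP; left; apply/orP; left; lra.
have h' : (up t <= - z)%Z by lia.
have := IZR_le _ _ h'; rewrite opp_IZR => /RleP h3.
rewrite ?RoppE -/u in h3.
apply/orP; right; apply/orP; right; lra.
Qed.

Section Spec.

Variables (n : nat) (alpha : 'I_n -> R).

Definition ell (x : 'cV[int]_(n.+1)) : R := \sum_j (x j 0)%:~R * ext_vec alpha j.

Definition qv (x : 'cV[int]_(n.+1)) : 'I_n -> Z := fun j => toZ (x (widen_ord (leqnSn n) j) 0).

Lemma ell_split x : ell x = L_form alpha (qv x) + IZR (toZ (x ord_max 0)).
Proof.
rewrite /ell big_ord_recr /= ev_max mulr1 IZR_toZ; congr (_ + _).
rewrite /L_form sumRE; apply: eq_bigr => j _.
by rewrite ev_widen /qv IZR_toZ RmultE mulrC.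
Qed.

Lemma ell_lb (cb : R) (x : 'cV[int]_(n.+1)) (k : 'I_n) :
  (forall q : 'I_n -> Z, (exists i, q i <> 0%Z) ->
      dist_int (L_form alpha q) >= cb * / (supnormZ q ^ n))%R ->
  x (widen_ord (leqnSn n) k) 0 != 0 ->
  1 <= supnormZ (qv x) /\ cb / (supnormZ (qv x)) ^+ n <= `|ell x|.
Proof.
move=> hb xk.
have qnz : exists i, qv x i <> 0%Z.
  by exists k; rewrite /qv => /toZ_eq0 /eqP; apply/negP.
split.
  have := bigmax_ge (fun j => Rabs (IZR (qv x j))) k.
  rewrite /supnormZ; move=> h; apply: le_trans h; rewrite RabsE.
  rewrite /qv IZR_toZ -intr_norm ler1z.
  move: xk; set z := x _ 0; lia.
have := Rge_le _ _ (hb _ qnz) => /RleP.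
rewrite RmultE RinvE RpowE => h; apply: le_trans h _.
rewrite ell_split; exact: dist_le.
Qed.


Definition Tm (H : R) : 'M[R]_(n.+1) :=
  \matrix_(k, j) (if (k < n)%nat then (k == j)%:R / H else H ^+ n * ext_vec alpha j).

Lemma Tx H (x : 'cV[int]_(n.+1)) k :
  (Tm H *m intmx R x) k 0 = if (k < n)%nat then (x k 0)%:~R / H else H ^+ n * ell x.
Proof.
rewrite mxE; case: ifP => hk.
  rewrite (bigD1 k) //= big1 ?addr0.
    by rewrite !mxE hk eqxx mul1r mulrC.
  by move=> j /negPf jk; rewrite !mxE hk eq_sym jk mul0r mul0r.
rewrite /ell mulr_sumr; apply: eq_bigr => j _; rewrite !mxE hk; ring.
Qed.

Lemma qfT H (x : 'cV[int]_(n.+1)) :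
  qf ((Tm H)^T *m Tm H) (intmx R x) = \sum_k ((Tm H *m intmx R x) k 0) ^+ 2.
Proof.
rewrite /qf !mulmxA -trmx_mul -mulmxA mxE.
by apply: eq_bigr => k _; rewrite mxE expr2.
Qed.

Lemma detT H : H != 0 -> \det (Tm H) = 1.
Proof.
move=> H0; rewrite det_trig; last first.
  apply/is_trig_mxP => i j lij; rewrite mxE.
  case: ifP => hi; first by rewrite (_ : (i == j) = false) ?mul0r //; apply/eqP => ij; rewrite ij ltnn in lij.
  by move: (ltn_ord j) lij; rewrite ltnS; move/negbT: hi; rewrite -leqNgt; lia.
rewrite big_ord_recr /= mxE ltnn ev_max mulr1.
rewrite (eq_bigr (fun _ => H^-1)); last first.
  by move=> i _; rewrite mxE /= ltn_ord eqxx mul1r.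
by rewrite prodr_const card_ord -exprMn mulVf // expr1n.
Qed.


Lemma term_le_sum m (F : 'I_m -> R) k0 : (forall k, 0 <= F k) -> F k0 <= \sum_k F k.
Proof.
move=> h; rewrite (bigD1 k0) //= lerDl; apply: sumr_ge0 => k _; exact: h.
Qed.

Lemma sq_ge (a b : R) : 0 <= a -> a <= `|b| -> a ^+ 2 <= b ^+ 2.
Proof. move=> a0 ab; rewrite -[b ^+ 2](real_normK (num_real b)); have := normr_ge0 b; nra. Qed.

Lemma lowbT cb H : 0 < cb -> 1 <= H ->
  (forall q : 'I_n -> Z, (exists i, q i <> 0%Z) ->
      dist_int (L_form alpha q) >= cb * / (supnormZ q ^ n))%R ->
  lowb ((Tm H)^T *m Tm H) ((Num.min 1 cb) ^+ 2).
Proof.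
move=> cb0 H1 hb x xnz; rewrite qfT.
set ka := Num.min 1 cb.
have ka0 : 0 < ka by rewrite lt_min ltr01 cb0.
have ka1 : ka <= 1 by rewrite ge_min lexx.
have kacb : ka <= cb by rewrite ge_min lexx orbT.
have H0 : 0 < H by apply: lt_le_trans H1; exact: ltr01.
have sq : forall k, 0 <= ((Tm H *m intmx R x) k 0) ^+ 2 by move=> k; exact: sqr_ge0.
have Hn1 : 1 <= H ^+ n by apply: exprn_ege1.
case: (boolP [exists k : 'I_n, H <= `|(x (widen_ord (leqnSn n) k) 0)%:~R : R|]).
  move=> /existsP [k hk].
  apply: le_trans (term_le_sum (widen_ord (leqnSn n) k) sq).
  rewrite Tx /= ltn_ord.
  apply: (@le_trans _ _ 1); first by rewrite expr_le1 // ltW.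
  rewrite -[X in X <= _](expr1n _ 2); apply: sq_ge; first exact: ler01.
  by rewrite normrM normfV (gtr0_norm H0) ler_pdivlMr // mul1r.
move=> /existsPn hall.
apply: le_trans (term_le_sum ord_max sq).
rewrite Tx /= ltnn.
case: (boolP [exists k : 'I_n, x (widen_ord (leqnSn n) k) 0 != 0]).
  move=> /existsP [k hk].
  have [M1 hM] := ell_lb hb hk.
  set M := supnormZ (qv x) in M1 hM.
  have MH : M <= H.
    rewrite /M /supnormZ; apply: bigmax_le; first exact: ltW.
    move=> j; have := hall j; rewrite /qv IZR_toZ RabsE -ltNge => h; exact: ltW.
  have M0 : 0 < M by apply: lt_le_trans M1; exact: ltr01.
  have MnHn : M ^+ n <= H ^+ n by rewrite lerXn2r // ?nnegrE ltW.
  have Mn0 : 0 < M ^+ n by apply: exprn_gt0.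
  apply: sq_ge; first exact: ltW.
  rewrite normrM (ger0_norm (ltW (exprn_gt0 _ H0))).
  apply: (le_trans kacb).
  apply: (@le_trans _ _ (H ^+ n * (cb / M ^+ n))); last by rewrite ler_pM2l // exprn_gt0.
  rewrite mulrCA ler_pMr // ler_pdivlMr // mul1r //.
move=> /existsPn hz.
have xmax : x ord_max 0 != 0.
  apply: contraNneq xnz => hm; apply/eqP/matrixP => j i; rewrite ord1 mxE.
  case: (unliftP ord_max j) => [k ->|->] //.
  rewrite (_ : lift ord_max k = widen_ord (leqnSn n) k); last by apply: val_inj; rewrite /= /bump leqNgt ltn_ord.
  by apply/eqP; have := hz k; rewrite negbK.
have ellE : ell x = (x ord_max 0)%:~R.
  rewrite /ell big_ord_recr /= ev_max mulr1 big1 ?add0r // => k _.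
  by have := hz k; rewrite negbK => /eqP ->; rewrite mul0r.
rewrite ellE; apply: sq_ge; first exact: ltW.
rewrite normrM (ger0_norm (ltW (exprn_gt0 _ H0))).
apply: (le_trans ka1); apply: (le_trans Hn1); rewrite ler_peMr //; first by apply: (le_trans ler01).
rewrite -intr_norm ler1z; move: xmax; set z := x _ 0; lia.
Qed.


Lemma sq_le_S (z F : R) : z ^+ 2 <= F -> `|z| <= Num.max 1 F.
Proof.
move=> h; rewrite le_max; case: (lerP `|z| 1) => // z1; apply/orP; right.
apply: le_trans h; rewrite -[z ^+ 2](real_normK (num_real z)) expr2 ler_peMr //.
  exact: ltW.
Qed.

Lemma col_bounds H F (u : 'cV[int]_(n.+1)) : 1 <= H ->
  qf ((Tm H)^T *m Tm H) (intmx R u) <= F ->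
  (forall k, `|(u k 0)%:~R : R| <= (1 + \sum_j `|alpha j|) * Num.max 1 F * H) /\
  `|ell u| <= Num.max 1 F / H ^+ n.
Proof.
move=> H1 hq.
set S := Num.max 1 F.
have H0 : 0 < H by apply: lt_le_trans H1; exact: ltr01.
have Hn0 : 0 < H ^+ n by apply: exprn_gt0.
have S1 : 1 <= S by rewrite le_max lexx.
have sq : forall k, 0 <= ((Tm H *m intmx R u) k 0) ^+ 2 by move=> k; exact: sqr_ge0.
have hk : forall k, `|(Tm H *m intmx R u) k 0| <= S.
  move=> k; apply: sq_le_S; apply: le_trans hq; rewrite qfT; exact: term_le_sum.
have hell : `|ell u| <= S / H ^+ n.
  have := hk ord_max; rewrite Tx /= ltnn normrM (gtr0_norm Hn0).
  by rewrite ler_pdivlMr // mulrC.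
have hq' : forall k : 'I_n, `|(u (widen_ord (leqnSn n) k) 0)%:~R : R| <= S * H.
  move=> k; have := hk (widen_ord (leqnSn n) k); rewrite Tx /= ltn_ord.
  by rewrite normrM normfV (gtr0_norm H0) ler_pdivrMr.
have A0 : 0 <= \sum_j `|alpha j| by apply: sumr_ge0 => j _; exact: normr_ge0.
have SH : S <= S * H by rewrite ler_peMr // (le_trans ler01).
split => // k.
case: (unliftP ord_max k) => [j ->|->].
  rewrite (_ : lift ord_max j = widen_ord (leqnSn n) j); last by apply: val_inj; rewrite /= /bump leqNgt ltn_ord.
  apply: le_trans (hq' j) _; rewrite -mulrA mulrDl mul1r lerDl.
  by apply: mulr_ge0 => //; apply: mulr_ge0; [apply: le_trans S1; exact: ler01 | exact: ltW].
have E : (u ord_max 0)%:~R = ell u - \sum_(j < n) (u (widen_ord (leqnSn n) j) 0)%:~R * alpha j.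
  rewrite /ell big_ord_recr /= ev_max mulr1.
  rewrite (eq_bigr (fun j : 'I_n => (u (widen_ord (leqnSn n) j) 0)%:~R * alpha j)); last by move=> j _; rewrite ev_widen.
  by rewrite addrC addrK.
rewrite E; apply: le_trans (ler_normB _ _) _.
have hs : `|\sum_(j < n) (u (widen_ord (leqnSn n) j) 0)%:~R * alpha j| <= (\sum_j `|alpha j|) * (S * H).
  apply: le_trans (ler_norm_sum _ _ _) _; rewrite mulr_suml; apply: ler_sum => j _.
  by rewrite normrM mulrC ler_wpM2l ?normr_ge0.
have hell2 : `|ell u| <= S * H.
  apply: le_trans hell _; apply: le_trans SH; rewrite ler_pdivrMr // ler_peMr //.
    by apply: le_trans S1; exact: ler01.
  exact: exprn_ege1.
rewrite -mulrA mulrDl mul1r; exact: lerD hell2 hs.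
Qed.


Lemma ell_nz cb (x : 'cV[int]_(n.+1)) : 0 < cb ->
  (forall q : 'I_n -> Z, (exists i, q i <> 0%Z) ->
      dist_int (L_form alpha q) >= cb * / (supnormZ q ^ n))%R ->
  x != 0 -> 0 < `|ell x|.
Proof.
move=> cb0 hb xnz.
case: (boolP [exists k : 'I_n, x (widen_ord (leqnSn n) k) 0 != 0]).
  move=> /existsP [k hk].
  have [M1 hM] := ell_lb hb hk.
  apply: lt_le_trans hM; apply: divr_gt0 => //; apply: exprn_gt0.
  by apply: lt_le_trans M1; exact: ltr01.
move=> /existsPn hz.
have xmax : x ord_max 0 != 0.
  apply: contraNneq xnz => hm; apply/eqP/matrixP => j i; rewrite ord1 mxE.
  case: (unliftP ord_max j) => [k ->|->] //.
  rewrite (_ : lift ord_max k = widen_ord (leqnSn n) k); last by apply: val_inj; rewrite /= /bump leqNgt ltn_ord.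
  by apply/eqP; have := hz k; rewrite negbK.
have ellE : ell x = (x ord_max 0)%:~R.
  rewrite /ell big_ord_recr /= ev_max mulr1 big1 ?add0r // => k _.
  by have := hz k; rewrite negbK => /eqP ->; rewrite mul0r.
rewrite ellE -intr_norm ltr0z; move: xmax; set z := x _ 0; lia.
Qed.

Lemma mxvecE (A : 'M[int]_(n.+1)) i :
  Rabs (\big[Rplus/0%R]_(j < n.+1) (intR (A i j) * ext_vec alpha j)) = `|ell (A^T *m delta_mx i 0)|.
Proof.
rewrite RabsE sumRE /ell; congr `|_|; apply: eq_bigr => j _.
by rewrite intRE -colE !mxE.
Qed.


Lemma delta_nz : (delta_mx 0 0 : 'cV[int]_(n.+1)) != 0.
Proof. by apply/negP => /eqP /matrixP /(_ 0 0); rewrite !mxE. Qed.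

Lemma mxvec_pos cb (B : 'M[int]_(n.+1)) : 0 < cb ->
  (forall q : 'I_n -> Z, (exists i, q i <> 0%Z) ->
      dist_int (L_form alpha q) >= cb * / (supnormZ q ^ n))%R ->
  B \in unitmx -> 0 < mxvec_supnorm B (ext_vec alpha).
Proof.
move=> cb0 hb uB.
have h := bigmax_ge (fun i => Rabs (\big[Rplus/0%R]_(j < n.+1) (intR (B i j) * ext_vec alpha j))) 0.
rewrite /mxvec_supnorm; apply: lt_le_trans h; rewrite /= mxvecE.
apply: (ell_nz cb0 hb); apply: unit_nz; last exact: delta_nz.
by rewrite unitmx_tr.
Qed.

Lemma fin_delta cb (s : seq 'M[int]_(n.+1)) : 0 < cb ->
  (forall q : 'I_n -> Z, (exists i, q i <> 0%Z) ->
      dist_int (L_form alpha q) >= cb * / (supnormZ q ^ n))%R ->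
  exists d : R, 0 < d /\ forall B, B \in s -> B \in unitmx -> d <= mxvec_supnorm B (ext_vec alpha).
Proof.
move=> cb0 hb; elim: s => [|B s [d [d0 hd]]].
  by exists 1; split => //; exact: ltr01.
case: (boolP (B \in unitmx)) => uB.
  exists (Num.min d (mxvec_supnorm B (ext_vec alpha))); split.
    by rewrite lt_min d0 (mxvec_pos cb0 hb uB).
  move=> B'; rewrite inE => /orP[/eqP -> _|hB' uB']; first by rewrite ge_min lexx orbT.
  by rewrite ge_min hd.
exists d; split => // B'; rewrite inE => /orP[/eqP -> uB'|]; first by rewrite uB' in uB.
exact: hd.
Qed.


Lemma main_core (hn : (0 < n)%nat) : badly_approximable alpha ->
  exists c : R, 0 < c /\ forall s : seq 'M[int]_(n.+1), exists A : 'M[int]_(n.+1),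
    A \in unitmx /\ A \notin s /\
    mxvec_supnorm A (ext_vec alpha) < c / (mx_supnorm A ^+ n).
Proof.
move=> [cb [/RltP cb0 hb]].
set ep := (Num.min 1 cb) ^+ 2.
have ep0 : 0 < ep by apply: exprn_gt0; rewrite lt_min ltr01 cb0.
have [F hF] := basis (n.+1) 1 ep0.
set S := Num.max 1 F.
set A0 := 1 + \sum_j `|alpha j|.
set C0 := A0 * S.
have S1 : 1 <= S by rewrite le_max lexx.
have A01 : 1 <= A0 by rewrite lerDl; apply: sumr_ge0 => j _; exact: normr_ge0.
have SC0 : S <= C0 by rewrite ler_peMl // (le_trans ler01 S1).
have C01 : 1 <= C0 by apply: le_trans SC0.
have C00 : 0 < C0 by apply: lt_le_trans C01; exact: ltr01.
exists (2 * C0 ^+ n.+1); split.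
  by apply: mulr_gt0; [exact: ltr0n | exact: exprn_gt0].
move=> s; have [d [d0 hd]] := fin_delta s cb0 hb.
set H := C0 / d + 1.
have H1 : 1 <= H by rewrite lerDr; apply: ltW; apply: divr_gt0.
have H0 : 0 < H by apply: lt_le_trans H1; exact: ltr01.
have Hn0 : 0 < H ^+ n by apply: exprn_gt0.
have sG : ((Tm H)^T *m Tm H)^T = (Tm H)^T *m Tm H by rewrite trmx_mul trmxK.
have dG : \det ((Tm H)^T *m Tm H) <= 1.
  by rewrite det_mulmx det_tr detT ?mulr1 // gt_eqF.
have [U [uU hU]] := hF _ sG (lowbT cb0 H1 hb) dG.
have cbd i := col_bounds (u := col i U) H1 (hU i).
exists U^T; split; first by rewrite unitmx_tr.
have mxv : mxvec_supnorm U^T (ext_vec alpha) <= S / H ^+ n.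
  rewrite /mxvec_supnorm; apply: bigmax_le.
    by apply: divr_ge0; [exact: le_trans ler01 S1 | exact: ltW].
  move=> i; rewrite mxvecE trmxK -colE; exact: (cbd i).2.
have msn : mx_supnorm U^T <= C0 * H.
  have CH0 : 0 <= C0 * H by apply: mulr_ge0; exact: ltW.
  rewrite /mx_supnorm; apply: bigmax_le => // i; apply: bigmax_le => // j.
  rewrite intRE RabsE mxE; have := (cbd i).1 j; rewrite mxE.
  by [].
have [j hj] : exists j, (col 0 U) j 0 != 0.
  have := unit_nz uU delta_nz; rewrite -colE => hc.
  case: (boolP [exists j, (col 0 U) j 0 != 0]) => [/existsP //|/existsPn hn0].
  by case/negP: hc; apply/eqP/matrixP => k l; rewrite ord1; have := hn0 k; rewrite negbK => /eqP ->; rewrite mxE.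
have msn1 : 1 <= mx_supnorm U^T.
  rewrite /mx_supnorm.
  have h1 := bigmax_ge (fun j0 => Rabs (intR (U^T 0 j0))) j.
  have h2 := bigmax_ge (fun i => \big[Rmax/R0]_(j0 < n.+1) Rabs (intR (U^T i j0))) 0.
apply: le_trans h2. apply: le_trans h1 => /=.
rewrite intRE RabsE -intr_norm ler1z mxE. move: hj; rewrite mxE; set z := U j 0. clear -z; lia.
have HHn : H <= H ^+ n by apply: ler_eXnr.
have SHd : S / H ^+ n < d.
  apply: le_lt_trans (_ : S / H ^+ n <= S / H) _.
    by rewrite ler_pdivrMr // mulrAC ler_pdivlMr // ler_wpM2l // (le_trans ler01 S1).
  rewrite ltr_pdivrMr // /H mulrDr mulrCA divff ?gt_eqF // mulr1 mulr1.
  by apply: le_lt_trans SC0 _; rewrite ltrDl.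
split.
apply/negP => hin. have h := hd _ hin (etrans (unitmx_tr U) uU).
have h2 := le_lt_trans h (le_lt_trans mxv SHd). by rewrite ltxx in h2.
apply: le_lt_trans mxv _.
have m0 : 0 < mx_supnorm U^T by apply: lt_le_trans msn1; exact: ltr01.
have mn0 : 0 < mx_supnorm U^T ^+ n by apply: exprn_gt0.
have mnle : mx_supnorm U^T ^+ n <= (C0 * H) ^+ n.
  apply: lerXn2r => //; rewrite nnegrE; [exact: ltW | apply: mulr_ge0; exact: ltW].
rewrite ltr_pdivlMr //.
have S0 : 0 <= S by apply: le_trans S1; exact: ler01.
apply: le_lt_trans (_ : S / H ^+ n * mx_supnorm U^T ^+ n <= S / H ^+ n * (C0 * H) ^+ n) _.
  by rewrite ler_wpM2l // divr_ge0 // ltW.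
have -> : S / H ^+ n * (C0 * H) ^+ n = S * C0 ^+ n.
  by rewrite exprMn; field; rewrite expf_neq0 // gt_eqF.
have Cn0 : 0 < C0 ^+ n by apply: exprn_gt0.
apply: le_lt_trans (_ : S * C0 ^+ n <= C0 * C0 ^+ n) _; first by rewrite ler_wpM2r // ltW.
rewrite -exprS ltr_pMl ?exprn_gt0 //; exact: ltr1n.
Qed.

End Spec.

End AppS.
End Aux.

Theorem mainTheorem8 (n : nat) (hn : (0 < n)%nat) (alpha : 'I_n -> R) :
  Q_lin_indep alpha ->
  badly_approximable alpha ->
  exists c : R, 0 < c /\
    forall s : seq 'M[int]_(n.+1),
      exists A : 'M[int]_(n.+1),
        A \in unitmx /\ A \notin s /\
        mxvec_supnorm A (ext_vec alpha) < c * / (mx_supnorm A ^ n).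
Proof.
move=> _ hb.
have [c [c0 hc]] := Aux.main_core hn hb.
exists c; split; first by apply/RltP.
move=> s; have [A [uA [nA hA]]] := hc s.
exists A; split => //; split => //.
apply/RltP; by rewrite Rstruct.RmultE Rstruct.RinvE Rstruct.RpowE.
Qed.
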